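(* Let $n\geq 4$ and $m\geq 1$ be integers, let $K$ be an infinite field, and let $p(x_1,\ldots,x_m)\in K\langle x_1,\ldots,x_m\rangle$ be a noncommutative polynomial with zero constant term such that $\mathrm{ord}(p)=n-2$. Then $p(T_n(K))=T_n(K)^{(n-3)}$.
   Context: $T_n(K)$ denotes the algebra of $n\times n$ upper triangular matrices over $K$; $T_n(K)^{(t)}$ denotes the set of upper triangular matrices whose $(i,j)$ entries vanish whenever $j-i\leq t$ (so $T_n(K)^{(n-3)}$ consists of the matrices supported on the positions $(1,n-1),(2,n),(1,n)$). $p(T_n(K))=\{p(a_1,\ldots,a_m):a_i\in T_n(K)\}$. The order $\mathrm{ord}(p)$ is the least positive integer $r$ with $p(T_r(K))=\{0\}$ but $p(T_{r+1}(K))\neq\{0\}$ (with $T_1(K)=K$). *)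

(* Defs.v *)
From HB Require Import structures.
From mathcomp Require Import all_boot all_order all_algebra.
Set Implicit Arguments. Unset Strict Implicit. Unset Printing Implicit Defensive.
Import GRing.Theory.
Local Open Scope ring_scope.

(* A noncommutative polynomial p in K<x_1,...,x_m> is represented as a formal
   finite sum of terms c * x_{w_1} ... x_{w_k}, encoded as a list of pairs
   (c, w) with w : seq 'I_m a word in the variables (index i : 'I_m stands
   for x_{i+1}).  The empty word is the monomial 1. *)
Definition ncpoly (K : fieldType) (m : nat) := seq (K * seq 'I_m).

Definition const_term (K : fieldType) (m : nat) (p : ncpoly K m) : K :=
  \sum_(t <- p | t.2 == [::]) t.1.

Definition nceval (K : fieldType) (m n : nat) (p : ncpoly K m)
    (a : 'I_m -> 'M[K]_n) : 'M[K]_n :=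
  \sum_(t <- p) t.1 *: \big[mulmx/1%:M]_(i <- t.2) a i.

Definition upper_tri (K : fieldType) (n : nat) (A : 'M[K]_n) : Prop :=
  forall i j : 'I_n, (j < i)%N -> A i j = 0.

(* T_n(K)^(t): upper triangular matrices whose (i,j) entry vanishes whenever
   j - i <= t (as integers); equivalently whenever j <= i + t. *)
Definition upper_tri_t (K : fieldType) (n t : nat) (A : 'M[K]_n) : Prop :=
  forall i j : 'I_n, (j <= i + t)%N -> A i j = 0.

Definition vanishes_on_T (K : fieldType) (m : nat) (p : ncpoly K m) (r : nat)
    : Prop :=
  forall a : 'I_m -> 'M[K]_r, (forall k, upper_tri (a k)) -> nceval p a = 0.

(* ord(p) = r : r is the least positive integer with p(T_r) = {0} and
   p(T_{r+1}) <> {0}  (T_1(K) = 'M_1 = K) *)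
Definition has_ord (K : fieldType) (m : nat) (p : ncpoly K m) (r : nat) : Prop :=
  [/\ (0 < r)%N, vanishes_on_T p r, ~ vanishes_on_T p r.+1 &
      forall r', (0 < r')%N -> (r' < r)%N ->
        ~ (vanishes_on_T p r' /\ ~ vanishes_on_T p r'.+1)].

Definition in_image_T (K : fieldType) (m n : nat) (p : ncpoly K m)
    (A : 'M[K]_n) : Prop :=
  exists a : 'I_m -> 'M[K]_n, (forall k, upper_tri (a k)) /\ A = nceval p a.

Definition infinite_field (K : fieldType) : Prop :=
  ~ exists s : seq K, forall x : K, x \in s.

(* Main.v *)
Require Import Defs.
From mathcomp Require Import all_boot all_order all_algebra.
From Stdlib Require Import Classical.
From mathcomp Require Import zify.
Set Implicit Arguments. Unset Strict Implicit. Unset Printing Implicit Defensive.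
Import GRing.Theory.
Local Open Scope ring_scope.

Section Gen.
Variable K : fieldType.

Lemma upper_mul n (A B : 'M[K]_n) : upper_tri A -> upper_tri B -> upper_tri (A *m B).
Proof.
move=> hA hB i j lji; rewrite mxE big1 // => l _.
case: (ltnP l i) => [lli|hil]; first by rewrite hA ?mul0r.
by rewrite hB ?mulr0 // (leq_trans lji hil).
Qed.

Lemma upper_1 n : upper_tri (1%:M : 'M[K]_n).
Proof. move=> i j h; rewrite mxE; case: eqP => // e; by move: h; rewrite e ltnn. Qed.

Lemma upper_add n (A B : 'M[K]_n) : upper_tri A -> upper_tri B -> upper_tri (A + B).
Proof. by move=> hA hB i j h; rewrite mxE hA ?hB ?addr0. Qed.

Lemma upper_scale n c (A : 'M[K]_n) : upper_tri A -> upper_tri (c *: A).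
Proof. by move=> hA i j h; rewrite mxE hA ?mulr0. Qed.

Lemma upper_0 n : upper_tri (0 : 'M[K]_n).
Proof. by move=> i j h; rewrite mxE. Qed.

Lemma upper_prod m n (a : 'I_m -> 'M[K]_n) w : (forall k, upper_tri (a k)) ->
  upper_tri (\big[mulmx/1%:M]_(i <- w) a i).
Proof.
move=> ha; elim: w => [|x w IH]; first by rewrite big_nil; apply: upper_1.
by rewrite big_cons; apply: upper_mul.
Qed.

Lemma upper_nceval m n (p : ncpoly K m) (a : 'I_m -> 'M[K]_n) :
  (forall k, upper_tri (a k)) -> upper_tri (nceval p a).
Proof.
move=> ha; rewrite /nceval; elim: p => [|t p IH]; first by rewrite big_nil; apply: upper_0.
by rewrite big_cons; apply: upper_add => //; apply: upper_scale; apply: upper_prod.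
Qed.

Lemma eq_nceval m n (p : ncpoly K m) (a b : 'I_m -> 'M[K]_n) :
  (forall k, a k = b k) -> nceval p a = nceval p b.
Proof.
move=> e; rewrite /nceval; apply: eq_bigr => t _; congr (_ *: _).
by apply: eq_bigr => i _.
Qed.

Lemma zmod_shuffle (V : zmodType) (a b s e : V) : a + (s + e) = b + s + ((a - b) + e).
Proof. by rewrite (addrC b s) -[RHS]addrA [b + _]addrA (addrC b) subrK addrCA. Qed.

Lemma nceval_hom m r s (p : ncpoly K m) (h : 'M[K]_r -> 'M[K]_s) (a : 'I_m -> 'M[K]_r) :
  (forall c X Y, h (c *: X + Y) = c *: h X + h Y) ->
  (forall X Y, upper_tri X -> upper_tri Y -> h (X *m Y) = h X *m h Y) ->
  (forall k, upper_tri (a k)) ->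
  nceval p (fun k => h (a k)) = h (nceval p a) + const_term p *: (1%:M - h 1%:M).
Proof.
move=> hlin hmul ha.
have h0 : h 0 = 0.
  have := hlin 1 0 0; rewrite !scale1r addr0 => e.
  by apply: (addrI (h 0)); rewrite addr0 -e.
have hw : forall w, w != [::] -> \big[mulmx/1%:M]_(i <- w) h (a i) = h (\big[mulmx/1%:M]_(i <- w) a i).
  elim=> // x w IH _; rewrite !big_cons; case: w IH => [|y w] IH.
    by rewrite !big_nil !mulmx1.
  by rewrite IH // hmul //; apply: upper_prod.
rewrite /nceval /const_term; elim: p => [|t p IH].
  by rewrite !big_nil h0 scale0r addr0.
rewrite !big_cons IH.
have -> : h (t.1 *: \big[mulmx/1%:M]_(i <- t.2) a i + \sum_(j <- p) j.1 *: \big[mulmx/1%:M]_(i <- j.2) a i)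
   = t.1 *: h (\big[mulmx/1%:M]_(i <- t.2) a i) + h (\sum_(j <- p) j.1 *: \big[mulmx/1%:M]_(i <- j.2) a i) by apply: hlin.
case: t => c w /=; case: w hw => [|x w] hw /=.
  rewrite !big_nil; set D := (1%:M - h 1%:M); rewrite scalerDl.
  rewrite /D [c *: (_ - _)]scalerBr. exact: (@zmod_shuffle _ (c *: 1%:M) (c *: h 1%:M)).
by rewrite hw // addrA.
Qed.

Definition emb r s (f : 'I_r -> 'I_s) : 'M[K]_(s,r) := \matrix_(i,j) (i == f j)%:R.

Lemma embE r s (f : 'I_r -> 'I_s) i j : emb f i j = (i == f j)%:R.
Proof. by rewrite mxE. Qed.

Lemma embTE r s (f : 'I_r -> 'I_s) : injective f -> (emb f)^T *m emb f = 1%:M.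
Proof.
move=> fi; apply/matrixP=> a b; rewrite !mxE (bigD1 (f a)) //= big1 => [|l nl].
  by rewrite !mxE !(inj_eq fi) eq_refl mul1r addr0.
by rewrite !mxE (negbTE nl) mul0r.
Qed.

Lemma upper_emb r s (f : 'I_r -> 'I_s) (X : 'M[K]_r) :
  {mono f : a b / (a <= b)%N} -> upper_tri X -> upper_tri (emb f *m X *m (emb f)^T).
Proof.
move=> fm hX i j lji; rewrite mxE big1 // => b _; rewrite mxE big_distrl big1 //= => a _.
rewrite !mxE.
case: eqP => [ei|_]; last by rewrite !mul0r.
case: eqP => [ej|_]; last by rewrite mulr0.
rewrite hX ?mulr0 ?mul0r //.
by move: lji; rewrite ei ej !ltnNge fm.
Qed.

Lemma emb_lin r s (f : 'I_r -> 'I_s) c (X Y : 'M[K]_r) :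
  emb f *m (c *: X + Y) *m (emb f)^T = c *: (emb f *m X *m (emb f)^T) + emb f *m Y *m (emb f)^T.
Proof. by rewrite mulmxDr mulmxDl -scalemxAr -scalemxAl. Qed.

Lemma emb_mul r s (f : 'I_r -> 'I_s) (X Y : 'M[K]_r) : injective f ->
  emb f *m (X *m Y) *m (emb f)^T = (emb f *m X *m (emb f)^T) *m (emb f *m Y *m (emb f)^T).
Proof. by move=> fi; rewrite !mulmxA -(mulmxA (emb f *m X) (emb f)^T) embTE // mulmx1. Qed.

Lemma van_small m (p : ncpoly K m) r k : const_term p = 0 -> vanishes_on_T p r ->
  (k <= r)%N -> vanishes_on_T p k.
Proof.
move=> hc hv kr a ha.
pose f := widen_ord kr.
have fi : injective f by move=> x y /(congr1 val) /= e; apply: val_inj.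
have fm : {mono f : a b / (a <= b)%N} by [].
have := nceval_hom p (h := fun X => emb f *m X *m (emb f)^T) (@emb_lin _ _ f) (fun X Y _ _ => emb_mul X Y fi) ha.
rewrite hc scale0r addr0 hv; last by move=> k'; apply: upper_emb.
move=> e.
have -> : nceval p a = (emb f)^T *m (emb f *m nceval p a *m (emb f)^T) *m emb f.
  by rewrite !mulmxA embTE // mul1mx -mulmxA embTE // mulmx1.
by rewrite -e mulmx0 mul0mx.
Qed.

Lemma restr_entry r s (f : 'I_r -> 'I_s) (Z : 'M[K]_s) a b :
  ((emb f)^T *m Z *m emb f) a b = Z (f a) (f b).
Proof.
rewrite mxE (bigD1 (f b)) //= big1 => [|l nl]; last by rewrite embE (negbTE nl) mulr0.
rewrite embE eqxx mulr1 addr0 mxE (bigD1 (f a)) //= big1 => [|l nl].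
  by rewrite mxE embE eqxx mul1r addr0.
rewrite mxE embE; case: eqP => [e|_]; last by rewrite mul0r.
by move: nl; rewrite e eq_refl.
Qed.

Lemma sum_reindex N k (f : 'I_k -> 'I_N) (F : 'I_N -> K) : injective f ->
  (forall l, (forall c, l != f c) -> F l = 0) -> \sum_l F l = \sum_c F (f c).
Proof.
move=> fi hF.
transitivity (\sum_l \sum_c (l == f c)%:R * F l).
  apply: eq_bigr => l _; case: (pickP (fun c => l == f c)) => [c /eqP -> | nc].
    rewrite (bigD1 c) //= eqxx mul1r big1 ?addr0 // => c' nc'.
    by rewrite (inj_eq fi) eq_sym (negbTE nc') mul0r.
  rewrite hF ?big1 // => [c _|c]; first by rewrite nc mul0r.
  by rewrite nc.
rewrite exchange_big; apply: eq_bigr => c _; rewrite (bigD1 (f c)) //= eqxx mul1r big1 ?addr0 //.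
by move=> l /negbTE ->; rewrite mul0r.
Qed.

Lemma restr_mul r s (f : 'I_r -> 'I_s) (X Y : 'M[K]_s) : injective f ->
  (forall a b (l : 'I_s), (f a <= l <= f b)%N -> exists c, l = f c) ->
  upper_tri X -> upper_tri Y ->
  (emb f)^T *m (X *m Y) *m emb f = ((emb f)^T *m X *m emb f) *m ((emb f)^T *m Y *m emb f).
Proof.
move=> fi fc hX hY; apply/matrixP => a b.
rewrite restr_entry [RHS]mxE (eq_bigr (fun c => X (f a) (f c) * Y (f c) (f b))); last first.
  by move=> c _; rewrite !restr_entry.
rewrite mxE (@sum_reindex _ _ f (fun l => X (f a) l * Y l (f b))) //.
move=> l nl.
case: (ltnP l (f a)) => [h|h1]; first by rewrite hX ?mul0r.
case: (ltnP (f b) l) => [h|h2]; first by rewrite hY ?mulr0.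
have [c ec] := fc a b l (introT andP (conj h1 h2)).
by move: (nl c); rewrite ec eqxx.
Qed.

Lemma upper_restr r s (f : 'I_r -> 'I_s) (X : 'M[K]_s) :
  {mono f : a b / (a <= b)%N} -> upper_tri X -> upper_tri ((emb f)^T *m X *m emb f).
Proof.
move=> fm hX a b h; rewrite restr_entry hX //.
by move: h; rewrite !ltnNge fm.
Qed.

Lemma restr_lin r s (f : 'I_r -> 'I_s) c (X Y : 'M[K]_s) :
  (emb f)^T *m (c *: X + Y) *m emb f = c *: ((emb f)^T *m X *m emb f) + (emb f)^T *m Y *m emb f.
Proof. by rewrite mulmxDr mulmxDl -scalemxAr -scalemxAl. Qed.


Lemma shift_lt N i0 k (c : 'I_k) : (i0 + k <= N)%N -> (i0 + c < N)%N.
Proof. move=> H; apply: leq_trans H; by rewrite ltn_add2l. Qed.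
Definition shift_ord N i0 k (H : (i0 + k <= N)%N) (c : 'I_k) : 'I_N := Ordinal (shift_lt c H).

Lemma VAN m (p : ncpoly K m) r : const_term p = 0 -> vanishes_on_T p r ->
  forall N (b : 'I_m -> 'M[K]_N), (forall k, upper_tri (b k)) ->
  forall i j : 'I_N, (j < i + r)%N -> nceval p b i j = 0.
Proof.
move=> hc hv N b hb i j hij.
case: (ltnP j i) => [lt|le]; first by apply: upper_nceval.
have H : (i + (j - i).+1 <= N)%N by have := ltn_ord j; lia.
pose f := shift_ord H.
have fi : injective f by move=> x y /(congr1 val) /= /addnI e; apply: val_inj.
have fm : {mono f : x y / (x <= y)%N} by move=> x y /=; rewrite leq_add2l.
have fc : forall a b (l : 'I_N), (f a <= l <= f b)%N -> exists c, l = f c.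
  move=> a b' l /andP [h1 h2].
  have hl : (l - i < (j - i).+1)%N by move: h1 h2 (ltn_ord b'); rewrite /=; lia.
  exists (Ordinal hl); apply: val_inj => /=; move: h1; rewrite /=; lia.
have e1 : f ord0 = i by apply: val_inj; rewrite /= addn0.
have e2 : f ord_max = j by apply: val_inj; rewrite /=; lia.
have -> : nceval p b i j = nceval p b (f ord0) (f ord_max) by rewrite e1 e2.
rewrite -restr_entry.
have := nceval_hom p (h := fun X => (emb f)^T *m X *m emb f) (@restr_lin _ _ f)
  (fun X Y hX hY => restr_mul fi fc hX hY) hb.
rewrite hc scale0r addr0 => <-.
rewrite (van_small hc hv) ?mxE //; first by lia.
by move=> k; apply: upper_restr.
Qed.


Definition pf (F : K -> K) := exists q : {poly K}, forall t, F t = q.[t].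

Lemma pf_ext F G : (forall t, F t = G t) -> pf F -> pf G.
Proof. by move=> e [q hq]; exists q => t; rewrite -e. Qed.

Lemma pf_const c : pf (fun _ => c).
Proof. by exists c%:P => t; rewrite hornerC. Qed.

Lemma pf_id : pf (fun t => t).
Proof. by exists 'X => t; rewrite hornerX. Qed.

Lemma pf_add F G : pf F -> pf G -> pf (fun t => F t + G t).
Proof. by move=> [q1 h1] [q2 h2]; exists (q1 + q2) => t; rewrite hornerD h1 h2. Qed.

Lemma pf_mul F G : pf F -> pf G -> pf (fun t => F t * G t).
Proof. by move=> [q1 h1] [q2 h2]; exists (q1 * q2) => t; rewrite hornerM h1 h2. Qed.

Lemma pf_sum (I : Type) (r : seq I) (F : I -> K -> K) :
  (forall i, pf (F i)) -> pf (fun t => \sum_(i <- r) F i t).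
Proof.
move=> hF; elim: r => [|x r IH].
  by apply: (pf_ext (F := fun _ => 0)); [move=> t; rewrite big_nil | apply: pf_const].
apply: (pf_ext (F := fun t => F x t + \sum_(i <- r) F i t)); first by move=> t; rewrite big_cons.
exact: pf_add.
Qed.

Definition mpf n (M : K -> 'M[K]_n) := forall i j, pf (fun t => M t i j).

Lemma mpf_mul n (M N : K -> 'M[K]_n) : mpf M -> mpf N -> mpf (fun t => M t *m N t).
Proof.
move=> hM hN i j; apply: (pf_ext (F := fun t => \sum_l M t i l * N t l j)).
  by move=> t; rewrite mxE.
by apply: pf_sum => l; apply: pf_mul.
Qed.

Lemma mpf_add n (M N : K -> 'M[K]_n) : mpf M -> mpf N -> mpf (fun t => M t + N t).
Proof.
move=> hM hN i j; apply: (pf_ext (F := fun t => M t i j + N t i j)); first by move=> t; rewrite mxE.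
exact: pf_add.
Qed.

Lemma mpf_scale n c (M : K -> 'M[K]_n) : mpf M -> mpf (fun t => c *: M t).
Proof.
move=> hM i j; apply: (pf_ext (F := fun t => c * M t i j)); first by move=> t; rewrite mxE.
by apply: pf_mul => //; apply: pf_const.
Qed.

Lemma mpf_const n (A : 'M[K]_n) : mpf (fun _ => A).
Proof. by move=> i j; apply: pf_const. Qed.

Lemma mpf_line n (U V : 'M[K]_n) : mpf (fun t => U + t *: V).
Proof.
apply: mpf_add; first exact: mpf_const.
move=> i j; apply: (pf_ext (F := fun t => t * V i j)); first by move=> t; rewrite mxE.
by apply: pf_mul; [apply: pf_id | apply: pf_const].
Qed.

Lemma mpf_nceval m n (p : ncpoly K m) (B : K -> 'I_m -> 'M[K]_n) :
  (forall k, mpf (fun t => B t k)) -> mpf (fun t => nceval p (B t)).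
Proof.
move=> hB.
have hw : forall w, mpf (fun t => \big[mulmx/1%:M]_(i <- w) B t i).
  elim=> [|x w IH].
    by move=> i j; apply: (pf_ext (F := fun _ => (1%:M : 'M[K]_n) i j)); [move=> t; rewrite big_nil|apply: pf_const].
  move=> i j; apply: (pf_ext (F := fun t => (B t x *m \big[mulmx/1%:M]_(i <- w) B t i) i j)).
    by move=> t; rewrite big_cons.
  by apply: mpf_mul.
rewrite /nceval; elim: p => [|x p IH].
  by move=> i j; apply: (pf_ext (F := fun _ => (0 : 'M[K]_n) i j)); [move=> t; rewrite big_nil|apply: pf_const].
move=> i j; apply: (pf_ext (F := fun t => (x.1 *: \big[mulmx/1%:M]_(i <- x.2) B t i +
   \sum_(j <- p) j.1 *: \big[mulmx/1%:M]_(i <- j.2) B t i) i j)).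
  by move=> t; rewrite big_cons.
by apply: mpf_add => //; apply: mpf_scale.
Qed.

Lemma big_uniq : infinite_field K -> forall N, exists s : seq K, uniq s /\ size s = N.
Proof.
move=> hinf; elim=> [|N [s [us ss]]]; first by exists [::].
have [x hx] : exists x, x \notin s.
  apply: NNPP => hn; apply: hinf; exists s => x.
  by apply: NNPP => hx; apply: hn; exists x; apply/negP.
by exists (x :: s); rewrite /= hx us ss.
Qed.

Lemma two_nonroot F G t1 t2 : infinite_field K -> pf F -> pf G -> F t1 != 0 -> G t2 != 0 ->
  exists t, F t != 0 /\ G t != 0.
Proof.
move=> hinf [q1 h1] [q2 h2] n1 n2.
have q1n : q1 != 0 by apply: contraNneq n1 => e; rewrite h1 e horner0.
have q2n : q2 != 0 by apply: contraNneq n2 => e; rewrite h2 e horner0.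
have qn : q1 * q2 != 0 by rewrite mulf_neq0.
apply: NNPP => hn.
have hr : forall t, root (q1 * q2) t.
  move=> t; apply: NNPP => ht; apply: hn; exists t.
  by move: ht; rewrite /root hornerM -h1 -h2 mulf_eq0 => /negP; rewrite negb_or => /andP.
have [s [us ss]] := big_uniq hinf (size (q1 * q2)).
have hall : all (root (q1 * q2)) s by apply/allP => x _; apply: hr.
by have := max_poly_roots qn hall us; rewrite ss ltnn.
Qed.


Lemma upper_opp n (A : 'M[K]_n) : upper_tri A -> upper_tri (- A).
Proof. by move=> hA i j h; rewrite mxE hA ?oppr0. Qed.

Lemma dM_entry n (a b : 'I_n) (M : 'M[K]_n) i j : (delta_mx a b *m M) i j = (i == a)%:R * M b j.
Proof.
rewrite mxE (bigD1 b) //= big1 ?addr0 => [|l nl].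
  by rewrite mxE eq_refl andbT.
by rewrite mxE (negbTE nl) andbF mul0r.
Qed.

Lemma Md_entry n q (a : 'I_n) (b : 'I_n) (M : 'M[K]_(q,n)) i j : (M *m delta_mx a b) i j = M i a * (j == b)%:R.
Proof.
rewrite mxE (bigD1 a) //= big1 ?addr0 => [|l nl].
  by rewrite mxE eq_refl.
by rewrite mxE (negbTE nl) mulr0.
Qed.

Definition un n (a b : 'I_n) (u : K) : 'M[K]_n := 1%:M + u *: delta_mx a b.

Lemma un_inv n (a b : 'I_n) u : a != b -> un a b (- u) *m un a b u = 1%:M.
Proof.
move=> ab; rewrite /un mulmxDl mul1mx mulmxDr mulmx1 -scalemxAl -scalemxAr mul_delta_mx_cond.
by rewrite eq_sym (negbTE ab) mulr0n !scaler0 addr0 scaleNr addrK.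
Qed.

Lemma un_upper n (a b : 'I_n) u : (a < b)%N -> upper_tri (un a b u).
Proof.
move=> ab; apply: upper_add; first exact: upper_1.
apply: upper_scale => i j h; rewrite mxE.
case: eqP => [ei|]; last by [].
case: eqP => [ej|]; last by [].
by move: h; rewrite ei ej => /(ltn_trans ab); rewrite ltnn.
Qed.

Lemma un_entry n (a b : 'I_n) u (M : 'M[K]_n) i j :
  (un a b u *m M *m un a b (- u)) i j =
  (M i j + u * ((i == a)%:R * M b j)) + - u * ((M i a + u * ((i == a)%:R * M b a)) * (j == b)%:R).
Proof.
rewrite /un mulmxDl mul1mx -scalemxAl mulmxDr mulmx1 -scalemxAr.
set D1 := delta_mx a b *m M.
set X := M + u *: D1.
rewrite mxE [((- u) *: (X *m delta_mx a b) : 'M[K]_n) i j]mxE.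
have hX : forall i' j', X i' j' = M i' j' + u * ((i' == a)%:R * M b j').
  move=> i' j'; rewrite /X mxE; congr (_ + _); rewrite mxE; congr (_ * _); exact: dM_entry.
congr (_ + _ * _); first exact: hX.
transitivity (X i a * (j == b)%:R); first exact: Md_entry.
by rewrite hX.
Qed.

Definition dg n (j0 : 'I_n) (al : K) : 'M[K]_n := diag_mx (\row_i (if i == j0 then al else 1)).

Lemma dg_entry n (j0 : 'I_n) al be M i j :
  (dg j0 al *m M *m dg j0 be) i j = (if i == j0 then al else 1) * M i j * (if j == j0 then be else 1).
Proof. by rewrite /dg mul_mx_diag mul_diag_mx !mxE. Qed.

Lemma dg_inv n (j0 : 'I_n) al : al != 0 -> dg j0 al^-1 *m dg j0 al = 1%:M.
Proof.
move=> al0; rewrite /dg mulmx_diag; apply/matrixP => i j; rewrite !mxE.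
by case: (i == j0); rewrite ?mulVf ?mulr1.
Qed.

Lemma dg_upper n (j0 : 'I_n) al : upper_tri (dg j0 al).
Proof.
move=> i j h; rewrite mxE; case: eqP => [e|]; last by rewrite mulr0n.
by move: h; rewrite e ltnn.
Qed.

Lemma emb_delta r s (f : 'I_r -> 'I_s) a b :
  emb f *m delta_mx a b *m (emb f)^T = delta_mx (f a) (f b).
Proof.
apply/matrixP => i j; rewrite mxE (bigD1 b) //= big1 ?addr0 => [|l nl].
  transitivity (emb f i a * (b == b)%:R * (emb f)^T b j).
    by congr (_ * _); exact: Md_entry.
  rewrite !mxE eq_refl mulr1.
  by case: (i == f a); case: (j == f b); rewrite /= ?mulr1n ?mulr0n ?mulr1 ?mul0r ?mulr0.
transitivity (emb f i a * (l == b)%:R * (emb f)^T l j).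
  by congr (_ * _); exact: Md_entry.
by rewrite (negbTE nl) mulr0 mul0r.
Qed.

End Gen.

Section Main.
Variables (K : fieldType) (m k : nat) (p : ncpoly K m).
Hypothesis hc : const_term p = 0.
Hypothesis hv : vanishes_on_T p k.+2.

Definition ix (x : nat) : 'I_k.+4 := inord x.
Lemma ixK x : (x < k.+4)%N -> (ix x : nat) = x. Proof. by move=> h; rewrite /ix inordK. Qed.
Lemma ix_eq x y : (x < k.+4)%N -> (y < k.+4)%N -> (ix x == ix y) = (x == y).
Proof. by move=> hx hy; rewrite -val_eqE /= !ixK. Qed.
Lemma nSn : (k == k.+1) = false. Proof. by apply/eqP; lia. Qed.
Lemma Snn : (k.+1 == k) = false. Proof. by apply/eqP; lia. Qed.
Lemma nSn2 : (k.+2 == k.+3) = false. Proof. by apply/eqP; lia. Qed.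
Lemma Snn2 : (k.+3 == k.+2) = false. Proof. by apply/eqP; lia. Qed.

Definition S (M : 'M[K]_k.+4) := in_image_T p M.
Definition tri x y z (M : 'M[K]_k.+4) :=
  [/\ M (ix 0) (ix k.+2) = x, M (ix 1) (ix k.+3) = y & M (ix 0) (ix k.+3) = z].

Lemma S_supp M : S M -> forall x y, (x < k.+4)%N -> (y < k.+4)%N -> (y < x + k.+2)%N ->
  M (ix x) (ix y) = 0.
Proof. by move=> [a [ha ->]] x y hx hy hxy; apply: (VAN hc hv ha); rewrite !ixK. Qed.

Lemma conj_S (G H : 'M[K]_k.+4) M : H *m G = 1%:M -> upper_tri G -> upper_tri H -> S M ->
  S (G *m M *m H).
Proof.
move=> hHG hG hH [a [ha ->]].
exists (fun k' => G *m a k' *m H); split; first by move=> k'; apply: upper_mul => //; apply: upper_mul.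
have hl : forall c (X Y : 'M[K]_k.+4), G *m (c *: X + Y) *m H = c *: (G *m X *m H) + G *m Y *m H.
  by move=> c X Y; rewrite mulmxDr mulmxDl -scalemxAr -scalemxAl.
have hm : forall X Y : 'M[K]_k.+4, upper_tri X -> upper_tri Y ->
    G *m (X *m Y) *m H = (G *m X *m H) *m (G *m Y *m H).
  by move=> X Y _ _; rewrite !mulmxA -(mulmxA (G *m X) H G) hHG mulmx1.
have := nceval_hom p (h := fun X => G *m X *m H) hl hm ha.
by rewrite hc scale0r addr0 => e; rewrite -e.
Qed.

Lemma opD0 x y z al M : al != 0 -> S M -> tri x y z M ->
  exists M', S M' /\ tri (al * x) y (al * z) M'.
Proof.
move=> al0 hS [hx hy hz].
exists (dg (ix 0) al *m M *m dg (ix 0) al^-1); split.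
  by apply: conj_S => //; [apply: dg_inv | apply: dg_upper | apply: dg_upper].
split; rewrite dg_entry !ix_eq //= ?mulr1 ?mul1r ?hx ?hy ?hz //; lia.
Qed.

Lemma opD1 x y z al M : al != 0 -> S M -> tri x y z M ->
  exists M', S M' /\ tri x (al * y) z M'.
Proof.
move=> al0 hS [hx hy hz].
exists (dg (ix 1) al *m M *m dg (ix 1) al^-1); split.
  by apply: conj_S => //; [apply: dg_inv | apply: dg_upper | apply: dg_upper].
split; rewrite dg_entry !ix_eq //= ?mulr1 ?mul1r ?hx ?hy ?hz //; lia.
Qed.

Lemma opU01 x y z u M : S M -> tri x y z M -> exists M', S M' /\ tri x y (z + u * y) M'.
Proof.
move=> hS [hx hy hz].
have h1 : M (ix 1) (ix k.+2) = 0 by apply: (S_supp hS); lia.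
exists (un (ix 0) (ix 1) u *m M *m un (ix 0) (ix 1) (- u)); split.
  apply: conj_S => //; first by apply: un_inv; rewrite ix_eq //; lia.
    by apply: un_upper; rewrite !ixK //; lia.
  by apply: un_upper; rewrite !ixK //; lia.
split; rewrite un_entry !ix_eq /= ?mulr1n ?mulr0n ?mul1r ?mul0r ?mulr0 ?addr0 ?h1 ?hx ?hy ?hz ?mulr0 ?addr0 //; try lia.
Qed.

Lemma opU23 x y z w M : S M -> tri x y z M -> exists M', S M' /\ tri x y (z + - w * x) M'.
Proof.
move=> hS [hx hy hz].
have h1 : M (ix 1) (ix k.+2) = 0 by apply: (S_supp hS); lia.
exists (un (ix k.+2) (ix k.+3) w *m M *m un (ix k.+2) (ix k.+3) (- w)); split.
  apply: conj_S => //; first by apply: un_inv; rewrite ix_eq //= ?nSn //; lia.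
    by apply: un_upper; rewrite !ixK //; lia.
  by apply: un_upper; rewrite !ixK //; lia.
split; rewrite un_entry !ix_eq /= ?eqxx ?nSn ?Snn ?nSn2 ?Snn2 ?mulr1n ?mulr0n ?mul1r ?mul0r ?mulr0 ?mulr1 ?addr0 ?h1 ?hx ?hy ?hz ?mulr0 ?addr0 ?add0r //; try lia.
Qed.

Lemma tri_rw x y z x' y' z' M : tri x y z M -> x = x' -> y = y' -> z = z' -> tri x' y' z' M.
Proof. by move=> h <- <- <-. Qed.

Lemma tri_eq A M : upper_tri_t k.+1 A -> S M ->
  tri (A (ix 0) (ix k.+2)) (A (ix 1) (ix k.+3)) (A (ix 0) (ix k.+3)) M -> A = M.
Proof.
move=> hA hS [h1 h2 h3]; apply/matrixP => i j.
move: (ltn_ord i) (ltn_ord j) => hi hj.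
have ei : i = ix i by rewrite /ix inord_val.
have ej : j = ix j by rewrite /ix inord_val.
case: (ltnP j (i + k.+2)) => h.
  rewrite hA; last by lia.
  by rewrite ei ej (S_supp hS) //.
have [[hi0 hj2]|[[hi0 hj3]|[hi1 hj3]]] :
  ((i : nat) = 0 /\ (j : nat) = k.+2) \/ (((i : nat) = 0 /\ (j : nat) = k.+3) \/
   ((i : nat) = 1 /\ (j : nat) = k.+3)) by lia.
- by rewrite ei ej hi0 hj2 h1.
- by rewrite ei ej hi0 hj3 h3.
- by rewrite ei ej hi1 hj3 h2.
Qed.

Lemma S0 : S 0.
Proof.
exists (fun _ => 0); split; first by move=> _; apply: upper_0.
have hl : forall c (X Y : 'M[K]_k.+4), (0 : 'M[K]_k.+4) = c *: 0 + 0 by move=> *; rewrite scaler0 addr0.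
have hm : forall X Y : 'M[K]_k.+4, upper_tri X -> upper_tri Y -> (0 : 'M[K]_k.+4) = (0 : 'M[K]_k.+4) *m (0 : 'M[K]_k.+4).
  by move=> *; rewrite mulmx0.
have := nceval_hom p (h := fun _ : 'M[K]_k.+4 => (0 : 'M[K]_k.+4)) (a := fun _ => 0) hl hm
  (fun _ => @upper_0 _ _).
by rewrite hc scale0r !addr0 => ->.
Qed.

Definition mkf (g : nat -> nat) (hg : forall j, (j < k.+3)%N -> (g j < k.+4)%N) (j : 'I_k.+3)
  : 'I_k.+4 := Ordinal (hg j (ltn_ord j)).

Lemma mkf_props g hg : {mono g : a b / (a <= b)%N} ->
  injective (@mkf g hg) /\ {mono @mkf g hg : a b / (a <= b)%N}.
Proof.
move=> gm; split; last by move=> a b /=; apply: gm.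
move=> a b /(congr1 val) /= e; apply: val_inj; apply/eqP.
by rewrite eqn_leq -(gm a b) -(gm b a) e leqnn.
Qed.

Lemma delta_ix (u v : 'I_k.+4) x y : (x < k.+4)%N -> (y < k.+4)%N ->
  (delta_mx u v : 'M[K]_k.+4) (ix x) (ix y) = ((x == u) && (y == v))%:R.
Proof. by move=> hx hy; rewrite mxE -!val_eqE /= !ixK. Qed.

Lemma hg1 j : (j < k.+3)%N -> (j < k.+4)%N. Proof. lia. Qed.
Lemma hg2 j : (j < k.+3)%N -> (j.+1 < k.+4)%N. Proof. lia. Qed.
Lemma hg3 j : (j < k.+3)%N -> ((if j == 0 then 0 else j.+1) < k.+4)%N.
Proof. by case: eqP; lia. Qed.
Definition f1 := @mkf (fun j => j) hg1.
Definition f2 := @mkf (fun j => j.+1) hg2.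
Definition f3 := @mkf (fun j => if j == 0 then 0 else j.+1) hg3.
Lemma f1p : injective f1 /\ {mono f1 : a b / (a <= b)%N}.
Proof. by apply: mkf_props. Qed.
Lemma f2p : injective f2 /\ {mono f2 : a b / (a <= b)%N}.
Proof. by apply: mkf_props => a b; rewrite ltnS. Qed.
Lemma f3p : injective f3 /\ {mono f3 : a b / (a <= b)%N}.
Proof. apply: mkf_props => a b; case: a => [|a]; case: b => [|b] //=; by rewrite !ltnS. Qed.

Section Base.
Variables (a : 'I_m -> 'M[K]_k.+3) (c : K).
Hypotheses (ha : forall k', upper_tri (a k')) (hpa : nceval p a = c *: delta_mx 0 ord_max)
  (c0 : c != 0).

Lemma base_eval (f : 'I_k.+3 -> 'I_k.+4) : injective f -> {mono f : x y / (x <= y)%N} ->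
  nceval p (fun k' => emb K f *m a k' *m (emb K f)^T) = c *: delta_mx (f ord0) (f ord_max).
Proof.
move=> fi fm.
have := nceval_hom p (h := fun X => emb K f *m X *m (emb K f)^T) (@emb_lin _ _ _ f)
  (fun X Y _ _ => emb_mul X Y fi) ha.
rewrite hc scale0r addr0 hpa -scalemxAr -scalemxAl emb_delta => e; exact: e.
Qed.

Lemma base_S (f : 'I_k.+3 -> 'I_k.+4) : injective f -> {mono f : x y / (x <= y)%N} ->
  S (c *: delta_mx (f ord0) (f ord_max)).
Proof.
move=> fi fm; exists (fun k' => emb K f *m a k' *m (emb K f)^T); split.
  by move=> k'; apply: upper_emb.
by rewrite base_eval.
Qed.

Lemma P1 : exists M, S M /\ tri c 0 0 M.
Proof.
have [fi fm] := f1p; exists (c *: delta_mx (f1 ord0) (f1 ord_max)); split; first exact: base_S.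
split; rewrite mxE delta_ix /= ?eqxx ?nSn ?Snn ?nSn2 ?Snn2 ?mulr1 ?mulr0 //; lia.
Qed.

Lemma P2 : exists M, S M /\ tri 0 c 0 M.
Proof.
have [fi fm] := f2p; exists (c *: delta_mx (f2 ord0) (f2 ord_max)); split; first exact: base_S.
split; rewrite mxE delta_ix /= ?eqxx ?nSn ?Snn ?nSn2 ?Snn2 ?mulr1 ?mulr0 //; lia.
Qed.

Lemma P3 : exists M, S M /\ tri 0 0 c M.
Proof.
have [fi fm] := f3p; exists (c *: delta_mx (f3 ord0) (f3 ord_max)); split; first exact: base_S.
split; rewrite mxE delta_ix /= ?eqxx ?nSn ?Snn ?nSn2 ?Snn2 ?mulr1 ?mulr0 //; lia.
Qed.

End Base.

Section Surj.
Hypothesis hno : ~ vanishes_on_T p k.+3.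
Hypothesis hinf : infinite_field K.

Lemma get_a : exists a : 'I_m -> 'M[K]_k.+3, exists c,
  [/\ forall k', upper_tri (a k'), nceval p a = c *: delta_mx 0 ord_max & c != 0].
Proof.
have [a [ha hn]] : exists a : 'I_m -> 'M[K]_k.+3, (forall k', upper_tri (a k')) /\ nceval p a != 0.
  apply: NNPP => hn; apply: hno => a ha; apply/eqP; apply: NNPP => hne; apply: hn.
  by exists a; split => //; apply/negP.
set N := nceval p a.
have hN : N = N ord0 ord_max *: delta_mx 0 ord_max.
  apply/matrixP => i j; rewrite [RHS]mxE mxE.
  case: (ltnP j (i + k.+2)) => h.
    rewrite (VAN hc hv ha h).
    case: eqP => [ei|_]; case: eqP => [ej|_] //=; rewrite ?mulr0n ?mulr0 //.
    by move: h; rewrite ei ej /=; lia.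
  have ei : i = ord0 by apply: val_inj => /=; move: (ltn_ord j) h; lia.
  have ej : j = ord_max by apply: val_inj => /=; move: (ltn_ord j) h; lia.
  by rewrite ei ej !eq_refl /= mulr1.
exists a, (N ord0 ord_max); split => //.
apply: contraNneq hn => e.
by move: hN; rewrite e scale0r => /eqP.
Qed.

Lemma getQ (a : 'I_m -> 'M[K]_k.+3) c : (forall k', upper_tri (a k')) -> nceval p a = c *: delta_mx 0 ord_max -> c != 0 ->
  exists M x0 y0 z0, [/\ S M, tri x0 y0 z0 M, x0 != 0 & y0 != 0].
Proof.
move=> ha hpa c0.
have [f1i f1m] := f1p; have [f2i f2m] := f2p.
pose b (t : K) := fun k' => emb K f1 *m a k' *m (emb K f1)^T +
  t *: (emb K f2 *m a k' *m (emb K f2)^T - emb K f1 *m a k' *m (emb K f1)^T).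
have hpf := mpf_nceval p (B := b) (fun k' => mpf_line _ _).
have hb0 : nceval p (b 0) = c *: delta_mx (f1 ord0) (f1 ord_max).
  rewrite -(base_eval ha hpa f1i f1m); apply: eq_nceval => k'; by rewrite /b scale0r addr0.
have hb1 : nceval p (b 1) = c *: delta_mx (f2 ord0) (f2 ord_max).
  rewrite -(base_eval ha hpa f2i f2m); apply: eq_nceval => k'; by rewrite /b scale1r addrC subrK.
have n1 : nceval p (b 0) (ix 0) (ix k.+2) != 0.
  rewrite hb0 mxE delta_ix /= ?eqxx ?mulr1 //; lia.
have n2 : nceval p (b 1) (ix 1) (ix k.+3) != 0.
  rewrite hb1 mxE delta_ix /= ?eqxx ?mulr1 //; lia.
have [t [ht1 ht2]] := two_nonroot hinf (hpf (ix 0) (ix k.+2)) (hpf (ix 1) (ix k.+3)) n1 n2.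
exists (nceval p (b t)), (nceval p (b t) (ix 0) (ix k.+2)), (nceval p (b t) (ix 1) (ix k.+3)),
  (nceval p (b t) (ix 0) (ix k.+3)); split => //.
exists (b t); split => // k'.
apply: upper_add; first by apply: upper_emb.
apply: upper_scale; apply: upper_add; first by apply: upper_emb.
by apply: upper_opp; apply: upper_emb.
Qed.

Lemma surj x y z : exists M, S M /\ tri x y z M.
Proof.
have [a [c [ha hpa c0]]] := get_a.
case: (eqVneq x 0) => [-> | xn]; case: (eqVneq y 0) => [-> | yn].
- case: (eqVneq z 0) => [-> | zn].
    by exists 0; split; [exact: S0 | split; rewrite mxE].
  have [M [s t]] := P3 ha hpa.
  have [M' [s' t']] := opD0 (al := z / c) (mulf_neq0 zn (invr_neq0 c0)) s t.
  by exists M'; split => //; apply: (tri_rw t'); rewrite ?mulr0 ?divfK.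
- have [M [s t]] := P2 ha hpa.
  have [M1 [s1 t1]] := opD1 (al := y / c) (mulf_neq0 yn (invr_neq0 c0)) s t.
  have t1' : tri 0 y 0 M1 by apply: (tri_rw t1); rewrite ?divfK.
  have [M2 [s2 t2]] := opU01 (z / y) s1 t1'.
  by exists M2; split => //; apply: (tri_rw t2); rewrite ?add0r ?divfK.
- have [M [s t]] := P1 ha hpa.
  have [M1 [s1 t1]] := opD0 (al := x / c) (mulf_neq0 xn (invr_neq0 c0)) s t.
  have t1' : tri x 0 0 M1 by apply: (tri_rw t1); rewrite ?mulr0 ?divfK.
  have [M2 [s2 t2]] := opU23 (- (z / x)) s1 t1'.
  by exists M2; split => //; apply: (tri_rw t2); rewrite ?add0r ?opprK ?divfK.
- have [M [x0 [y0 [z0 [s t nx ny]]]]] := getQ ha hpa c0.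
  have [M1 [s1 t1]] := opD0 (al := x / x0) (mulf_neq0 xn (invr_neq0 nx)) s t.
  have [M2 [s2 t2]] := opD1 (al := y / y0) (mulf_neq0 yn (invr_neq0 ny)) s1 t1.
  set z1 := x / x0 * z0 in t2.
  have t2' : tri x y z1 M2 by apply: (tri_rw t2); rewrite ?divfK.
  have [M3 [s3 t3]] := opU01 ((z - z1) / y) s2 t2'.
  by exists M3; split => //; apply: (tri_rw t3); rewrite ?divfK // addrC subrK.
Qed.

End Surj.
End Main.

Theorem lemma3p3 (K : fieldType) (n m : nat) (p : ncpoly K m) :
  (4 <= n)%N -> (1 <= m)%N -> infinite_field K ->
  const_term p = 0%R -> has_ord p (n - 2) ->
  forall A : 'M[K]_n, in_image_T p A <-> upper_tri_t (n - 3) A.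
Proof.
move=> hn hm hinf hc [_ hv hno _] A.
have [k ek] : exists k, n = k.+4 by exists (n - 4)%N; lia.
subst n.
have e2 : (k.+4 - 2 = k.+2)%N by lia.
have e3 : (k.+4 - 3 = k.+1)%N by lia.
rewrite e2 in hv hno; rewrite e3.
split.
  by move=> [a [ha ->]] i j hij; apply: (VAN hc hv ha); lia.
move=> hA.
have [M [hS ht]] := surj hc hv hno hinf (A (ix k 0) (ix k k.+2)) (A (ix k 1) (ix k k.+3))
  (A (ix k 0) (ix k k.+3)).
by rewrite (tri_eq hc hv hA hS ht); exact: hS.
Qed.
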